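(* Let $d=d'+d''$ and, for $\tau=(\tau',\tau'')\in(0,1]^2$, let $g_\tau$ be the metric on $\mathbb{R}^{2d}=\mathbb{R}^{2(d'+d'')}$, with coordinates $X=(q',q'',p)$, $q'\in\mathbb{R}^{d'}$, $q''\in\mathbb{R}^{d''}$, $p\in\mathbb{R}^d$, given by $$g_\tau=\frac{\tau'dq'^2}{\langle\sqrt{\tau'}q'\rangle^2}+\tau''dq''^2+\frac{\tau'\tau''dp^2}{\langle\sqrt{\tau'\tau''}p\rangle^2}.$$ Then the family $(g_\tau)_{\tau\in(0,1]^2}$ is admissible.
   Context: $\langle t\rangle=(1+|t|^2)^{1/2}$. The symplectic form on $\mathbb{R}^{2d}_{q,p}$ is $\sigma(X,X_1)=\sum_j(p^jq_{1,j}-q_jp_1^j)$ for $X=(q,p)$, $X_1=(q_1,p_1)$. For a metric $g$ (a family of positive definite quadratic forms $g_X$, $X\in\mathbb{R}^{2d}$), the dual metric is $g^\sigma_X(T)=\sup_{T_1\neq0}\frac{|\sigma(T,T_1)|^2}{g_X(T_1)}$ and the gain is $\lambda(X)=\inf_{T\ne0}(g^\sigma_X(T)/g_X(T))^{1/2}$. A family $(g_\tau)_{\tau\in\mathcal{T}}$ of metrics is admissible if: (uncertainty) $\lambda_\tau(X)\ge1$ for all $\tau,X$; (slowness) there is $C_1>0$ independent of $\tau$ such that $g_{\tau,X}(X-Y)\le1/C_1$ implies $(g_{\tau,X}/g_{\tau,Y})^{\pm1}\le C_1$ (i.e. $C_1^{-1}g_{\tau,Y}\le g_{\tau,X}\le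 C_1g_{\tau,Y}$ as quadratic forms); (temperance) there are $C_2,N_2>0$ independent of $\tau$ such that for all $X,Y$, $(g_{\tau,X}/g_{\tau,Y})^{\pm1}\le C_2(1+g^\sigma_{\tau,X}(X-Y))^{N_2}$. *)

(* Defs.v *)
From HB Require Import structures.
From mathcomp Require Import all_boot all_order all_algebra.
From mathcomp Require Import all_classical all_reals all_analysis.
Set Implicit Arguments. Unset Strict Implicit. Unset Printing Implicit Defensive.
Import Order.TTheory GRing.Theory Num.Theory.
Local Open Scope ring_scope.
Local Open Scope classical_set_scope.

(* Points / tangent vectors of R^{2n} : pairs X = (q, p) with q, p in R^n. *)
Definition phase (R : realType) (n : nat) := ('rV[R]_n * 'rV[R]_n)%type.

Definition sqn (R : realType) (n : nat) (v : 'rV[R]_n) : R :=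
  \sum_(i < n) (v ord0 i) ^+ 2.

Definition sigma (R : realType) (n : nat) (X X1 : phase R n) : R :=
  \sum_(j < n) (X.2 ord0 j * X1.1 ord0 j - X.1 ord0 j * X1.2 ord0 j).

(* A metric: g X T is the quadratic form g_X evaluated at T. *)
Definition metric (R : realType) (n : nat) := phase R n -> phase R n -> R.

Definition dual_metric (R : realType) (n : nat) (g : metric R n)
  (X T : phase R n) : R :=
  sup [set r : R | exists T1 : phase R n, T1 != 0 /\
                   r = `|sigma T T1| ^+ 2 / g X T1].

Definition gain (R : realType) (n : nat) (g : metric R n) (X : phase R n) : R :=
  inf [set r : R | exists T : phase R n, T != 0 /\
                   r = Num.sqrt (dual_metric g X T / g X T)].

(* (g_X / g_Y)^{+-1} <= C, i.e. C^-1 g_Y <= g_X <= C g_Y as quadratic forms. *)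
Definition ratio_le (R : realType) (n : nat) (g : metric R n)
  (X Y : phase R n) (C : R) : Prop :=
  forall T : phase R n, g X T <= C * g Y T /\ g Y T <= C * g X T.

Definition admissible (R : realType) (n : nat) (I : Type) (P : I -> Prop)
  (g : I -> metric R n) : Prop :=
  (forall tau, P tau -> forall X, 1 <= gain (g tau) X) /\
  (exists C1 : R, 0 < C1 /\ forall tau, P tau -> forall X Y : phase R n,
       g tau X (X - Y) <= C1^-1 -> ratio_le (g tau) X Y C1) /\
  (exists C2 N2 : R, 0 < C2 /\ 0 < N2 /\ forall tau, P tau ->
     forall X Y : phase R n,
       ratio_le (g tau) X Y (C2 * (1 + dual_metric (g tau) X (X - Y)) `^ N2)).

Definition gA9 (R : realType) (d1 d2 : nat) (tau : R * R) :
  metric R (d1 + d2) :=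
  fun X T =>
    let q1 := lsubmx X.1 in
    let Tq1 := lsubmx T.1 in
    let Tq2 := rsubmx T.1 in
    tau.1 * sqn Tq1 / (1 + sqn (Num.sqrt tau.1 *: q1)) +
    tau.2 * sqn Tq2 +
    tau.1 * tau.2 * sqn T.2 / (1 + sqn (Num.sqrt (tau.1 * tau.2) *: X.2)).

Definition unit_square (R : realType) (tau : R * R) : Prop :=
  0 < tau.1 <= 1 /\ 0 < tau.2 <= 1.

(* Main.v *)
Require Import Defs.
From mathcomp Require Import all_boot all_order all_algebra.
From mathcomp Require Import all_classical all_reals all_analysis.
From mathcomp Require Import ring lra.
Import Order.TTheory GRing.Theory Num.Theory.
Set Implicit Arguments. Unset Strict Implicit. Unset Printing Implicit Defensive.
Local Open Scope ring_scope.
Local Open Scope classical_set_scope.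

Section Gen.
Variable R : realType.

Lemma sqn_ge0 m (v : 'rV[R]_m) : 0 <= sqn v.
Proof. by apply: sumr_ge0 => i _; rewrite sqr_ge0. Qed.

Lemma sqnZ m c (v : 'rV[R]_m) : sqn (c *: v) = c ^+ 2 * sqn v.
Proof. by rewrite /sqn mulr_sumr; apply: eq_bigr => i _; rewrite mxE exprMn. Qed.

Lemma sqn_tri m (u v w : 'rV[R]_m) : (forall i, w ord0 i = u ord0 i - v ord0 i) ->
  sqn v <= 2 * sqn u + 2 * sqn w /\ sqn u <= 2 * sqn v + 2 * sqn w.
Proof.
move=> Hw; rewrite /sqn !mulr_sumr -!big_split /=; split; apply: ler_sum => i _;
  rewrite Hw.
- have := sqr_ge0 (2 * u ord0 i - v ord0 i); nra.
- have := sqr_ge0 (u ord0 i - 2 * v ord0 i); nra.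
Qed.

Lemma am_gm (w t a b : R) : 0 < w -> 2 * t * a * b <= t ^+ 2 * (a ^+ 2 / w) + w * b ^+ 2.
Proof.
move=> w0.
have -> : t ^+ 2 * (a ^+ 2 / w) + w * b ^+ 2 = 2 * t * a * b + (t * a - w * b) ^+ 2 / w.
  by field; rewrite gt_eqF.
by rewrite lerDl divr_ge0 // ?sqr_ge0 ?ltW.
Qed.

Lemma le_div1 (w a : R) : 0 < w -> w <= 1 -> a <= a ^+ 2 / w -> True.
Proof. by []. Qed.

Lemma sq_le_div (w a : R) : 0 < w -> w <= 1 -> a ^+ 2 <= a ^+ 2 / w.
Proof.
move=> w0 w1; rewrite ler_pdivlMr //.
by rewrite ler_piMr ?sqr_ge0.
Qed.

Lemma wratio (c Du Dv K : R) : 0 < c -> 0 < Du -> 0 < Dv -> Dv <= K * Du ->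
  c / Du <= K * (c / Dv).
Proof.
move=> c0 u0 v0 H; rewrite ler_pdivrMr // mulrA mulrAC ler_pdivlMr //.
by rewrite (mulrC K) -mulrA ler_wpM2l // ?ltW // mulrC.
Qed.

Lemma peetre (c s r e : R) : 0 < c -> 0 <= r -> 0 <= e -> s <= 2 * r + 2 * e ->
  1 + c * s <= 2 * (1 + c * e) * (1 + c * r).
Proof.
move=> c0 r0 e0 H.
have H1 : c * s <= 2 * (c * r) + 2 * (c * e).
  by have := ler_wpM2l (ltW c0) H; rewrite mulrDr !mulrA ![c * 2]mulrC.
have : 0 <= (c * e) * (c * r) by rewrite mulr_ge0 // mulr_ge0 // ltW.
nra.
Qed.

Lemma slowc (c s r e : R) : 0 < c -> 0 <= s -> 0 <= r -> 0 <= e ->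
  c / (1 + c * s) * e <= 4^-1 ->
  r <= 2 * s + 2 * e -> s <= 2 * r + 2 * e ->
  1 + c * r <= 4 * (1 + c * s) /\ 1 + c * s <= 4 * (1 + c * r).
Proof.
move=> c0 s0 r0 e0 He H1 H2.
have D0 : 0 < 1 + c * s by rewrite ltr_pwDl // mulr_ge0 // ltW.
have He' : c * e <= (1 + c * s) / 4.
  by move: He; rewrite mulrAC ler_pdivrMr // [4^-1 * _]mulrC.
have A1 : c * r <= 2 * (c * s) + 2 * (c * e).
  by have := ler_wpM2l (ltW c0) H1; rewrite mulrDr !mulrA ![c * 2]mulrC.
have A2 : c * s <= 2 * (c * r) + 2 * (c * e).
  by have := ler_wpM2l (ltW c0) H2; rewrite mulrDr !mulrA ![c * 2]mulrC.
have P1 : 0 <= c * r by rewrite mulr_ge0 // ltW.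
have P2 : 0 <= c * s by rewrite mulr_ge0 // ltW.
split; lra.
Qed.

End Gen.

Section Main.
Variables (R : realType) (d1 d2 : nat) (t1 t2 : R).
Hypotheses (h1 : 0 < t1) (h1' : t1 <= 1) (h2 : 0 < t2) (h2' : t2 <= 1).
Local Notation n := (d1 + d2)%N.
Local Notation ph := (phase R n).
Local Notation g := (@gA9 R d1 d2 (t1, t2)).

Definition wA (X : ph) := t1 / (1 + t1 * sqn (lsubmx X.1)).
Definition wB (X : ph) := t1 * t2 / (1 + t1 * t2 * sqn X.2).
Definition wq (X : ph) (i : 'I_n) := if (i < d1)%N then wA X else t2.

Lemma t12 : 0 < t1 * t2. Proof. by rewrite mulr_gt0. Qed.
Lemma t12' : t1 * t2 <= 1. Proof. by rewrite mulr_ile1 // ltW. Qed.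

Lemma w_bnd (c s : R) : 0 < c -> c <= 1 -> 0 <= s -> 0 < c / (1 + c * s) /\ c / (1 + c * s) <= 1.
Proof.
move=> c0 c1 s0; have D : 0 < 1 + c * s by rewrite ltr_pwDl // mulr_ge0 // ltW.
split; first by rewrite divr_gt0.
rewrite ler_pdivrMr // mul1r (le_trans c1) // lerDl mulr_ge0 // ltW // ltW.
Qed.

Lemma wA_bnd X : 0 < wA X /\ wA X <= 1.
Proof. rewrite /wA; apply: w_bnd h1 h1' (sqn_ge0 _). Qed.
Lemma wB_bnd X : 0 < wB X /\ wB X <= 1.
Proof. rewrite /wB; apply: w_bnd t12 t12' (sqn_ge0 _). Qed.
Lemma wq_bnd X i : 0 < wq X i /\ wq X i <= 1.
Proof. rewrite /wq; case: ifP => _; [exact: wA_bnd | by split]. Qed.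

Lemma sqn_split (v : 'rV[R]_n) : sqn v = sqn (lsubmx v) + sqn (rsubmx v).
Proof. by rewrite /sqn big_split_ord; congr (_ + _); apply: eq_bigr => i _; rewrite mxE. Qed.

Lemma gE X T : g X T = wA X * sqn (lsubmx T.1) + t2 * sqn (rsubmx T.1) + wB X * sqn T.2.
Proof.
rewrite /gA9 /= !sqnZ !sqr_sqrtr ?(ltW h1) ?(ltW t12) //.
by rewrite /wA /wB; congr (_ + _ + _); rewrite mulrAC.
Qed.

Lemma gcoord X T : g X T =
  \sum_(i < n) (wq X i * T.1 ord0 i ^+ 2 + wB X * T.2 ord0 i ^+ 2).
Proof.
rewrite gE big_split /= -mulr_sumr big_split_ord /=.
have -> : \sum_(i < d1) wq X (lshift d2 i) * T.1 ord0 (lshift d2 i) ^+ 2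
    = wA X * sqn (lsubmx T.1).
  by rewrite /sqn mulr_sumr; apply: eq_bigr => i _; rewrite /wq /= ltn_ord mxE.
have -> : \sum_(i < d2) wq X (rshift d1 i) * T.1 ord0 (rshift d1 i) ^+ 2
    = t2 * sqn (rsubmx T.1).
  by rewrite /sqn mulr_sumr; apply: eq_bigr => i _; rewrite /wq /= ltnNge leq_addr mxE.
by [].
Qed.


Lemma term_ge0 (X T : ph) i : 0 <= wq X i * T.1 ord0 i ^+ 2 + wB X * T.2 ord0 i ^+ 2.
Proof.
have [q0 _] := wq_bnd X i; have [b0 _] := wB_bnd X.
by rewrite addr_ge0 // mulr_ge0 ?sqr_ge0 // ltW.
Qed.

Lemma g_ge0 (X T : ph) : 0 <= g X T.
Proof. by rewrite gcoord; apply: sumr_ge0 => i _; apply: term_ge0. Qed.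

Lemma gpos (X T : ph) : T != 0 -> 0 < g X T.
Proof.
move=> HT; rewrite lt_def g_ge0 andbT; apply: contra HT => /eqP H0.
move: H0; rewrite gcoord => /psumr_eq0P H.
have {}H i : T.1 ord0 i = 0 /\ T.2 ord0 i = 0.
  have [q0 _] := wq_bnd X i; have [b0 _] := wB_bnd X.
  have /eqP := H (fun i _ => term_ge0 X T i) i isT.
  have P1 : 0 <= wq X i * T.1 ord0 i ^+ 2 by rewrite mulr_ge0 ?sqr_ge0 ?ltW.
  have P2 : 0 <= wB X * T.2 ord0 i ^+ 2 by rewrite mulr_ge0 ?sqr_ge0 ?ltW.
  rewrite paddr_eq0 // => /andP [/eqP E1 /eqP E2].
  split; apply/eqP; rewrite -sqrf_eq0; apply/eqP.
  - by apply/eqP; move/eqP: E1; rewrite mulf_eq0 (gt_eqF q0).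
  - by apply/eqP; move/eqP: E2; rewrite mulf_eq0 (gt_eqF b0).
case: T H => a b H.
suff [-> ->] : a = 0 /\ b = 0 by [].
by split; apply/rowP => i; rewrite mxE; case: (H i).
Qed.

Definition Dm (X T : ph) := \sum_(i < n) (T.2 ord0 i ^+ 2 / wq X i + T.1 ord0 i ^+ 2 / wB X).

Lemma Dm_ge0 (X T : ph) : 0 <= Dm X T.
Proof.
apply: sumr_ge0 => i _; have [q0 _] := wq_bnd X i; have [b0 _] := wB_bnd X.
by rewrite addr_ge0 // divr_ge0 ?sqr_ge0 // ltW.
Qed.

Lemma sigma_bnd (X T T1 : ph) (t : R) : 2 * t * sigma T T1 <= t ^+ 2 * Dm X T + g X T1.
Proof.
rewrite gcoord /Dm /sigma mulr_sumr mulr_sumr -big_split /=; apply: ler_sum => i _.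
have [q0 _] := wq_bnd X i; have [b0 _] := wB_bnd X.
have A1 := am_gm t (T.2 ord0 i) (T1.1 ord0 i) q0.
have A2 := am_gm t (- T.1 ord0 i) (T1.2 ord0 i) b0.
rewrite sqrrN in A2.
have E : 2 * t * (T.2 ord0 i * T1.1 ord0 i - T.1 ord0 i * T1.2 ord0 i) =
  2 * t * T.2 ord0 i * T1.1 ord0 i + 2 * t * (- T.1 ord0 i) * T1.2 ord0 i by ring.
rewrite E; lra.
Qed.

Lemma ratio_bnd (X T T1 : ph) : T1 != 0 -> `|sigma T T1| ^+ 2 / g X T1 <= Dm X T + 1.
Proof.
move=> HT1; have G0 := gpos X HT1; have D0 := Dm_ge0 X T.
rewrite real_normK ?num_real // ler_pdivrMr //.
set s := sigma T T1; set E := Dm X T + 1.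
have E0 : 0 < E by rewrite /E; lra.
have := sigma_bnd X T T1 (s / E).
set k := s / E; have -> : s = k * E by rewrite /k divfK // gt_eqF.
rewrite -/E; move: (g X T1) G0 => G G0 H.
have HD : Dm X T = E - 1 by rewrite /E addrK.
rewrite HD in H.
have Hs : sigma T T1 = k * E by rewrite /k divfK // gt_eqF.
rewrite Hs in H.
have k2 : 0 <= k ^+ 2 by rewrite sqr_ge0.
have H3 : k ^+ 2 * E <= G by nra.
have := ler_wpM2l (ltW E0) H3; nra.
Qed.


Hypothesis hd : (0 < n)%N.

Definition T0 : ph := (const_mx 1, 0).
Lemma T0_neq0 : T0 != 0.
Proof.
apply/negP => /eqP H; have := congr1 (fun Z : ph => Z.1 ord0 (Ordinal hd)) H.
by rewrite /= !mxE => /eqP; rewrite oner_eq0.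
Qed.

Definition Sset (X T : ph) := [set r : R | exists T1 : ph, T1 != 0 /\
                   r = `|sigma T T1| ^+ 2 / g X T1].

Lemma hasS X T : has_sup (Sset X T).
Proof.
split; first by exists (`|sigma T T0| ^+ 2 / g X T0); exists T0; split => //; exact: T0_neq0.
exists (Dm X T + 1) => r [T1 [H1 ->]]; exact: ratio_bnd.
Qed.

Lemma sq_div (x : R) : x ^+ 2 / x = x.
Proof.
have [->|x0] := eqVneq x 0; first by rewrite expr0n /= mul0r.
by rewrite expr2 mulfK.
Qed.

Lemma dual_ge (X T : ph) : Dm X T <= dual_metric g X T.
Proof.
rewrite /dual_metric -/(Sset X T).
have [->|HT] := eqVneq T 0.
  have -> : Dm X 0 = 0.
    by rewrite /Dm big1 // => i _; rewrite /= !mxE expr0n /= !mul0r addr0.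
  apply: le_trans (sup_upper_bound (hasS X 0) _).
    2: by exists T0; split => //; exact: T0_neq0.
  by rewrite divr_ge0 ?sqr_ge0 ?g_ge0.
pose T1 : ph := (\row_i (T.2 ord0 i / wq X i), \row_i (- (T.1 ord0 i / wB X))).
have HT1 : T1 != 0.
  apply: contra HT => /eqP H1.
  have H i : T.1 ord0 i = 0 /\ T.2 ord0 i = 0.
    have [q0 _] := wq_bnd X i; have [b0 _] := wB_bnd X.
    have E1 := congr1 (fun Z : ph => Z.1 ord0 i) H1.
    have E2 := congr1 (fun Z : ph => Z.2 ord0 i) H1.
    move: E1 E2; rewrite /= !mxE => /eqP E1 /eqP E2.
    move: E1 E2; rewrite oppr_eq0 !mulf_eq0 !invr_eq0 (gt_eqF q0) (gt_eqF b0) !orbF.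
    by move=> /eqP -> /eqP ->.
  case: T H {H1 T1} => a b H.
  suff [-> ->] : a = 0 /\ b = 0 by [].
  by split; apply/rowP => i; rewrite mxE; case: (H i).
have Es : sigma T T1 = Dm X T.
  by rewrite /sigma /Dm; apply: eq_bigr => i _; rewrite !mxE; ring.
have Eg : g X T1 = Dm X T.
  rewrite gcoord /Dm; apply: eq_bigr => i _; rewrite !mxE.
  have [q0 _] := wq_bnd X i; have [b0 _] := wB_bnd X.
  by field; rewrite (gt_eqF q0) (gt_eqF b0).
have <- : `|sigma T T1| ^+ 2 / g X T1 = Dm X T.
  by rewrite Es Eg real_normK ?num_real // sq_div.
apply: (sup_upper_bound (hasS X T)); by exists T1.
Qed.


Lemma den_pos (c s : R) : 0 < c -> 0 <= s -> 0 < 1 + c * s.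
Proof. by move=> c0 s0; rewrite ltr_pwDl // mulr_ge0 // ltW. Qed.

Lemma slow_w (c s r e : R) : 0 < c -> 0 <= s -> 0 <= r -> 0 <= e ->
  c / (1 + c * s) * e <= 4^-1 ->
  r <= 2 * s + 2 * e -> s <= 2 * r + 2 * e ->
  c / (1 + c * s) <= 4 * (c / (1 + c * r)) /\ c / (1 + c * r) <= 4 * (c / (1 + c * s)).
Proof.
move=> c0 s0 r0 e0 He H1 H2; have [A B] := slowc c0 s0 r0 e0 He H1 H2.
by split; apply: wratio => //; apply: den_pos.
Qed.

Lemma temp_w (c s r e Q : R) : 0 < c -> c <= 1 -> 0 <= s -> 0 <= r -> 0 <= e ->
  1 + e <= Q -> r <= 2 * s + 2 * e -> s <= 2 * r + 2 * e ->
  c / (1 + c * s) <= 2 * Q * (c / (1 + c * r)) /\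
  c / (1 + c * r) <= 2 * Q * (c / (1 + c * s)).
Proof.
move=> c0 c1 s0 r0 e0 HQ H1 H2.
have ce : c * e <= e by rewrite ler_piMl.
have P1 := peetre c0 r0 e0 H2.
have P2 := peetre c0 s0 e0 H1.
have cr : 0 <= c * r by rewrite mulr_ge0 // ltW.
have cs : 0 <= c * s by rewrite mulr_ge0 // ltW.
have cee : 0 <= c * e by rewrite mulr_ge0 // ltW.
split; apply: wratio => //; try apply: den_pos => //.
- have : (1 + c * e) * (1 + c * r) <= Q * (1 + c * r).
    by rewrite ler_wpM2r // ?addr_ge0 //; lra.
  nra.
- have : (1 + c * e) * (1 + c * s) <= Q * (1 + c * s).
    by rewrite ler_wpM2r // ?addr_ge0 //; lra.
  nra.
Qed.

Lemma combine (K xA yA xB yB t a b c : R) : 1 <= K -> 0 <= a -> 0 <= b -> 0 <= c ->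
  0 <= t -> xA <= K * yA -> xB <= K * yB ->
  xA * a + t * b + xB * c <= K * (yA * a + t * b + yB * c).
Proof.
move=> K1 a0 b0 c0 t0 HA HB.
have := ler_wpM2r a0 HA; have := ler_wpM2r c0 HB.
have : t * b <= K * (t * b) by rewrite ler_peMl // mulr_ge0.
nra.
Qed.

Lemma tri_lsub (X Y : ph) :
  let u := lsubmx X.1 in let v := lsubmx Y.1 in let w := lsubmx (X - Y).1 in
  sqn v <= 2 * sqn u + 2 * sqn w /\ sqn u <= 2 * sqn v + 2 * sqn w.
Proof. by apply: sqn_tri => i; rewrite !mxE. Qed.

Lemma tri_p (X Y : ph) :
  sqn Y.2 <= 2 * sqn X.2 + 2 * sqn (X - Y).2 /\ sqn X.2 <= 2 * sqn Y.2 + 2 * sqn (X - Y).2.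
Proof. by apply: sqn_tri => i; rewrite !mxE. Qed.

Lemma slow (X Y : ph) : g X (X - Y) <= 4^-1 -> ratio_le g X Y 4.
Proof.
rewrite gE => H.
have [a0 a1] := wA_bnd X; have [b0 b1] := wB_bnd X.
have HA : wA X * sqn (lsubmx (X - Y).1) <= 4^-1.
  have : 0 <= t2 * sqn (rsubmx (X - Y).1) by rewrite mulr_ge0 ?sqn_ge0 // ltW.
  have : 0 <= wB X * sqn (X - Y).2 by rewrite mulr_ge0 ?sqn_ge0 // ltW.
  lra.
have HB : wB X * sqn (X - Y).2 <= 4^-1.
  have : 0 <= t2 * sqn (rsubmx (X - Y).1) by rewrite mulr_ge0 ?sqn_ge0 // ltW.
  have : 0 <= wA X * sqn (lsubmx (X - Y).1) by rewrite mulr_ge0 ?sqn_ge0 // ltW.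
  lra.
have [L1 L2] := tri_lsub X Y; have [P1 P2] := tri_p X Y.
have [A1 A2] := slow_w h1 (sqn_ge0 _) (sqn_ge0 _) (sqn_ge0 _) HA L1 L2.
have [B1 B2] := slow_w t12 (sqn_ge0 _) (sqn_ge0 _) (sqn_ge0 _) HB P1 P2.
move=> T; rewrite !gE; split; apply: combine; rewrite ?sqn_ge0 ?(ltW h2) //;
  lra.
Qed.

Lemma Dm_ge (X T : ph) : sqn T.1 + sqn T.2 <= Dm X T.
Proof.
rewrite /Dm /sqn -big_split /=; apply: ler_sum => i _.
have [q0 q1] := wq_bnd X i; have [b0 b1] := wB_bnd X.
have := sq_le_div (T.2 ord0 i) q0 q1; have := sq_le_div (T.1 ord0 i) b0 b1.
lra.
Qed.

Lemma g_le_Dm (X T : ph) : g X T <= Dm X T.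
Proof.
rewrite gcoord /Dm; apply: ler_sum => i _.
have [q0 q1] := wq_bnd X i; have [b0 b1] := wB_bnd X.
have := sq_le_div (T.2 ord0 i) q0 q1; have := sq_le_div (T.1 ord0 i) b0 b1.
have : wq X i * T.1 ord0 i ^+ 2 <= T.1 ord0 i ^+ 2 by rewrite ler_piMl ?sqr_ge0.
have : wB X * T.2 ord0 i ^+ 2 <= T.2 ord0 i ^+ 2 by rewrite ler_piMl ?sqr_ge0.
lra.
Qed.

Lemma gain_ge1 (X : ph) : 1 <= gain g X.
Proof.
apply: lb_le_inf.
  by exists (Num.sqrt (dual_metric g X T0 / g X T0)); exists T0; split => //; exact: T0_neq0.
move=> r [T [HT ->]].
have G0 := gpos X HT.
have D0 : 0 <= dual_metric g X T := le_trans (Dm_ge0 X T) (dual_ge X T).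
rewrite -sqrtr1 ler_sqrt; last by rewrite divr_ge0 // ltW.
rewrite ler_pdivlMr // mul1r.
exact: le_trans (g_le_Dm X T) (dual_ge X T).
Qed.

Lemma temper (X Y : ph) :
  ratio_le g X Y (2 * (1 + dual_metric g X (X - Y)) `^ 1).
Proof.
set Q := 1 + dual_metric g X (X - Y).
have Dd := dual_ge X (X - Y); have Dg := Dm_ge X (X - Y).
have s1 := sqn_ge0 (X - Y).1; have s2 := sqn_ge0 (X - Y).2.
have Q0 : 0 <= Q by rewrite /Q; have := Dm_ge0 X (X - Y); lra.
rewrite powRr1 //.
have Q1 : 1 <= Q by rewrite /Q; have := Dm_ge0 X (X - Y); lra.
have eA : 1 + sqn (lsubmx (X - Y).1) <= Q.
  have := sqn_split (X - Y).1; have := sqn_ge0 (rsubmx (X - Y).1); rewrite /Q; lra.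
have eB : 1 + sqn (X - Y).2 <= Q by rewrite /Q; lra.
have [L1 L2] := tri_lsub X Y; have [P1 P2] := tri_p X Y.
have [A1 A2] := temp_w h1 h1' (sqn_ge0 _) (sqn_ge0 _) (sqn_ge0 _) eA L1 L2.
have [B1 B2] := temp_w t12 t12' (sqn_ge0 _) (sqn_ge0 _) (sqn_ge0 _) eB P1 P2.
move=> T; rewrite !gE; split; apply: combine; rewrite ?sqn_ge0 ?(ltW h2) //;
  lra.
Qed.

End Main.

Theorem propositionA9 (R : realType) (d1 d2 : nat) (hd : (0 < d1 + d2)%N) :
  admissible (@unit_square R) (@gA9 R d1 d2).
Proof.
split; [|split].
- move=> [t1 t2] [/andP [h1 h1'] /andP [h2 h2']] X /=.
  by apply: gain_ge1.
- exists 4; split => //.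
  move=> [t1 t2] [/andP [h1 h1'] /andP [h2 h2']] X Y /=.
  by apply: slow.
- exists 2, 1; split => //; split => //.
  move=> [t1 t2] [/andP [h1 h1'] /andP [h2 h2']] X Y /=.
  by apply: temper.
Qed.
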